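(* Let $P,Q$ be probability measures, $X\sim P$, and suppose $\mathbb{P}[\imath_{P\|Q}(X)=x]=0$ for every $x\in\mathbb{R}$. Then: (a) $\gamma\mapsto E_\gamma(P\|Q)$ is continuously differentiable on $(1,\infty)$ with derivative $E'_\gamma(P\|Q)\le 0$; (b) for all $\gamma>1$, $$\mathbb{F}_{P\|Q}(\log\gamma) = 1-E_\gamma(P\|Q)+\gamma E'_\gamma(P\|Q),\qquad \mathbb{F}_{P\|Q}(-\log\gamma) = -E'_\gamma(Q\|P),$$ and $\mathbb{F}_{P\|Q}(0) = 1-E_1(P\|Q)+\lim_{\gamma\downarrow1}E'_\gamma(P\|Q) = -\lim_{\gamma\downarrow1}E'_\gamma(Q\|P)$; (c) consequently, the family $\{E_\gamma(P\|Q):\gamma\ge1\}$ determines $\mathbb{F}_{P\|Q}$ on $[0,\infty)$, and the family $\{E_\gamma(Q\|P):\gamma>1\}$ determines $\mathbb{F}_{P\|Q}$ on $(-\infty,0)$.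
   Context: $\log$ is to a fixed base $b>1$. For densities $p,q$ of $P,Q$ w.r.t. a dominating measure $\mu$, $\imath_{P\|Q}:=\log p-\log q$ (in $[-\infty,\infty]$), $\mathbb{F}_{P\|Q}(x):=\mathbb{P}[\imath_{P\|Q}(X)\le x]$ with $X\sim P$. For $\gamma\ge1$, $E_\gamma(P\|Q):=\sup_U\bigl(P(U)-\gamma Q(U)\bigr)=\int(p-\gamma q)^+\,\mathrm{d}\mu$. *)

(* Defs.v *)
From HB Require Import structures.
From mathcomp Require Import all_boot all_order all_algebra.
From mathcomp Require Import all_classical all_reals all_analysis.
Set Implicit Arguments. Unset Strict Implicit. Unset Printing Implicit Defensive.
Import Order.TTheory GRing.Theory Num.Theory.
Import numFieldNormedType.Exports.
Local Open Scope classical_set_scope.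
Local Open Scope ring_scope.

Definition logb {R : realType} (b x : R) : R := ln x / ln b.

Definition is_density {R : realType} {d} {T : measurableType d}
  (mu : {measure set T -> \bar R}) (P : set T -> \bar R) (p : T -> R) : Prop :=
  measurable_fun setT p /\ (forall t, 0 <= p t) /\
  (forall A, measurable A -> P A = (\int[mu]_(t in A) (p t)%:E)%E).

(* information density  i_{P||Q} = log p - log q  in [-oo, +oo]
   (the value where p = q = 0 is irrelevant: that set is P- and Q-null) *)
Definition infodens {R : realType} {T : Type} (b : R) (p q : T -> R) (t : T)
  : \bar R :=
  if p t == 0 then (if q t == 0 then 0%E else -oo%E)
  else if q t == 0 then +oo%E
  else (logb b (p t) - logb b (q t))%:E.

Definition relcdf {R : realType} {d} {T : measurableType d}
  (P : set T -> \bar R) (b : R) (p q : T -> R) (x : R) : R :=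
  fine (P [set t | (infodens b p q t <= x%:E)%E]).

Definition Egamma {R : realType} {d} {T : measurableType d}
  (P Q : set T -> \bar R) (g : R) : R :=
  fine (ereal_sup [set (P U - g%:E * Q U)%E | U in measurable]).

Definition no_atoms {R : realType} {d} {T : measurableType d}
  (P : set T -> \bar R) (b : R) (p q : T -> R) : Prop :=
  forall x : R, P [set t | infodens b p q t = x%:E] = 0%E.

(* Main.v *)
Require Import Defs.
From HB Require Import structures.
From mathcomp Require Import all_boot all_order all_algebra.
From mathcomp Require Import all_classical all_reals all_analysis.
From mathcomp Require Import measurable_realfun ring lra.
Set Implicit Arguments. Unset Strict Implicit. Unset Printing Implicit Defensive.
Import Order.TTheory GRing.Theory Num.Theory.
Import numFieldNormedType.Exports.
Local Open Scope classical_set_scope.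
Local Open Scope ring_scope.

Lemma mset_lt (R : realType) d (T : measurableType d) (f g : T -> R) :
  measurable_fun setT f -> measurable_fun setT g -> measurable [set t | f t < g t].
Proof.
move=> mf mg. have mt : measurable [set true] by [].
have := measurable_fun_ltr mf mg measurableT mt.
rewrite setTI; congr measurable; apply/seteqP; split => t //=.
Qed.

Lemma mset_le (R : realType) d (T : measurableType d) (f g : T -> R) :
  measurable_fun setT f -> measurable_fun setT g -> measurable [set t | f t <= g t].
Proof.
move=> mf mg. have mt : measurable [set true] by [].
have := measurable_fun_ler mf mg measurableT mt.
rewrite setTI; congr measurable; apply/seteqP; split => t //=.
Qed.

Lemma pr_fine (R : realType) d (T : measurableType d) (P : probability T R) A :
  measurable A -> P A = (fine (P A))%:E.
Proof. by move=> mA; rewrite fineK // fin_num_measure. Qed.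

Lemma pr_fine_ge0 (R : realType) d (T : measurableType d) (P : probability T R) A :
  0 <= fine (P A).
Proof. by apply: fine_ge0. Qed.

Lemma pr_fine_le1 (R : realType) d (T : measurableType d) (P : probability T R) A :
  measurable A -> fine (P A) <= 1.
Proof. by move=> mA; rewrite -lee_fin -pr_fine // probability_le1. Qed.

Lemma mfE (R : realType) d (T : measurableType d) (p : T -> R) (V : set T) (k : R) :
  measurable_fun setT p -> measurable V -> measurable_fun V ((fun t => (k * p t)%:E) : T -> \bar R).
Proof.
move=> mp mV; apply/measurable_EFinP; apply: measurable_funM => //.
exact: (measurable_funS measurableT).
Qed.

Lemma dens_le (R : realType) d (T : measurableType d) (mu : {measure set T -> \bar R})
  (P Q : probability T R) p q (hp : is_density mu P p) (hq : is_density mu Q q)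
  (k : R) V : 0 <= k -> measurable V -> (forall t, V t -> p t <= k * q t) ->
  fine (P V) <= k * fine (Q V).
Proof.
move=> k0 mV H; rewrite -lee_fin -pr_fine // EFinM -pr_fine //.
rewrite hp.2.2 // hq.2.2 // -ge0_integralZl_EFin //; last first.
- by apply/measurable_EFinP; exact: (measurable_funS measurableT _ hq.1).
- by move=> t _; rewrite lee_fin hq.2.1.
apply: ge0_le_integral => //.
- by move=> t _; rewrite lee_fin hp.2.1.
- by apply/measurable_EFinP; exact: (measurable_funS measurableT _ hp.1).
- have -> : (fun x => (k%:E * (q x)%:E)%E) = (fun t => (k * q t)%:E) by apply: funext => t; rewrite EFinM.
  apply/measurable_EFinP; apply: measurable_funM => //; exact: (measurable_funS measurableT _ hq.1).
Qed.

Lemma dens_ge (R : realType) d (T : measurableType d) (mu : {measure set T -> \bar R})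
  (P Q : probability T R) p q (hp : is_density mu P p) (hq : is_density mu Q q)
  (k : R) V : 0 <= k -> measurable V -> (forall t, V t -> k * q t <= p t) ->
  k * fine (Q V) <= fine (P V).
Proof.
move=> k0 mV H; rewrite -lee_fin -(@pr_fine _ _ _ P) // EFinM -pr_fine //.
rewrite hp.2.2 // hq.2.2 // -ge0_integralZl_EFin //; last first.
- by apply/measurable_EFinP; exact: (measurable_funS measurableT _ hq.1).
- by move=> t _; rewrite lee_fin hq.2.1.
apply: ge0_le_integral => //.
- by move=> t _; rewrite -EFinM lee_fin mulr_ge0 // hq.2.1.
- have -> : (fun x => (k%:E * (q x)%:E)%E) = (fun t => (k * q t)%:E) by apply: funext => t; rewrite EFinM.
  apply/measurable_EFinP; apply: measurable_funM => //; exact: (measurable_funS measurableT _ hq.1).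
- by apply/measurable_EFinP; exact: (measurable_funS measurableT _ hp.1).
Qed.

Lemma dens_zero (R : realType) d (T : measurableType d) (mu : {measure set T -> \bar R})
  (P : probability T R) p (hp : is_density mu P p) V :
  measurable V -> (forall t, V t -> p t = 0) -> P V = 0%E.
Proof.
move=> mV H; rewrite hp.2.2 //.
rewrite (eq_integral (fun _ => 0%E)) ?integral0_eq // => t; rewrite inE => /H ->.
by [].
Qed.

Definition Aset (R : realType) (T : Type) (p q : T -> R) (g : R) := [set t | g * q t < p t].

Lemma Aset_m (R : realType) d (T : measurableType d) (p q : T -> R) g :
  measurable_fun setT p -> measurable_fun setT q -> measurable (Aset p q g).
Proof.
move=> mp mq; apply: mset_lt => //; apply: measurable_funM; [exact: measurable_cst|exact: mq].
Qed.

Lemma prDI (R : realType) d (T : measurableType d) (P : probability T R) A B :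
  measurable A -> measurable B -> fine (P A) = fine (P (A `\` B)) + fine (P (A `&` B)).
Proof.
move=> mA mB.
have mD : measurable (A `\` B) by exact: measurableD.
have mI : measurable (A `&` B) by exact: measurableI.
apply: EFin_inj; rewrite EFinD -(pr_fine P mA) -(pr_fine P mD) -(pr_fine P mI).
exact: measureDI.
Qed.


Lemma core (R : realType) d (T : measurableType d) (mu : {measure set T -> \bar R})
  (P Q : probability T R) p q (hp : is_density mu P p) (hq : is_density mu Q q)
  (g : R) U : 0 <= g -> measurable U ->
  fine (P U) - g * fine (Q U) <= fine (P (Aset p q g)) - g * fine (Q (Aset p q g)).
Proof.
move=> g0 mU; set A := Aset p q g.
have mA : measurable A by apply: Aset_m; [exact: hp.1|exact: hq.1].
rewrite (prDI P mU mA) (prDI Q mU mA) (prDI P mA mU) (prDI Q mA mU) (setIC A U).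
have h1 := dens_le hp hq g0 (measurableD mU mA) (fun t (H : (U `\` A) t) => ltac:(move: H => [_ /negP]; rewrite -leNgt; exact)).
have h2 := dens_ge hp hq g0 (measurableD mA mU) (fun t (H : (A `\` U) t) => ltac:(move: H => [/ltW H _]; exact: H)).
lra.
Qed.

Lemma Egamma_eq (R : realType) d (T : measurableType d) (mu : {measure set T -> \bar R})
  (P Q : probability T R) p q (hp : is_density mu P p) (hq : is_density mu Q q)
  (g : R) : 0 <= g ->
  Egamma P Q g = fine (P (Aset p q g)) - g * fine (Q (Aset p q g)).
Proof.
move=> g0; set A := Aset p q g.
have mA : measurable A by apply: Aset_m; [exact: hp.1|exact: hq.1].
rewrite /Egamma; set S := [set _ | _ in _].
suff -> : ereal_sup S = (fine (P A) - g * fine (Q A))%:E by [].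
apply/le_anti/andP; split.
- apply: ge_ereal_sup => x [U mU <-].
  rewrite (pr_fine P mU) (pr_fine Q mU) -EFinM -EFinB lee_fin.
  exact: (core hp hq g0 mU).
- apply: ereal_sup_ubound; exists A => //.
  by rewrite (pr_fine P mA) (pr_fine Q mA) -EFinM -EFinB.
Qed.

Lemma Egamma_ge (R : realType) d (T : measurableType d) (mu : {measure set T -> \bar R})
  (P Q : probability T R) p q (hp : is_density mu P p) (hq : is_density mu Q q)
  (g g' : R) : 0 <= g -> 0 <= g' ->
  Egamma P Q g - (g' - g) * fine (Q (Aset p q g)) <= Egamma P Q g'.
Proof.
move=> g0 g'0; rewrite (Egamma_eq hp hq g0) (Egamma_eq hp hq g'0).
have mA : measurable (Aset p q g) by apply: Aset_m; [exact: hp.1|exact: hq.1].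
have := core hp hq g'0 mA; lra.
Qed.

Lemma delta_anti (R : realType) (n m : nat) : (n <= m)%N -> (m.+1%:R^-1 : R) <= n.+1%:R^-1.
Proof. by move=> nm; rewrite lef_pV2 ?posrE ?ltr0Sn // ler_nat ltnS. Qed.

Lemma delta_gt0 (R : realType) (n : nat) : 0 < (n.+1%:R^-1 : R).
Proof. by rewrite invr_gt0 ltr0Sn. Qed.

Lemma arch (R : realType) (x c : R) : 0 <= x -> 0 < c -> exists n : nat, n.+1%:R^-1 * x < c.
Proof.
move=> x0 c0.
have e0 : 0 < c / (x + 1) by rewrite divr_gt0 // ltr_wpDl.
have [N _ HN] := near_infty_natSinv_lt (PosNum e0).
exists N; have /= := HN N (leqnn N).
set dl := N.+1%:R^-1 => hd.
have d0 : 0 < dl := delta_gt0 R N.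
have hx : c / (x + 1) * (x + 1) = c by rewrite mulfVK // gt_eqF // ltr_wpDl.
nra.
Qed.

Lemma small_seq (R : realType) d (T : measurableType d) (P : probability T R)
  (B : nat -> set T) : (forall n, measurable (B n)) ->
  (forall n m, (n <= m)%N -> B m `<=` B n) -> P (\bigcap_n B n) = 0%E ->
  forall e : R, 0 < e -> exists n, fine (P (B n)) < e.
Proof.
move=> mB dB B0 e e0.
have := @nonincreasing_cvg_mu _ _ _ P B (le_lt_trans (probability_le1 P (mB 0%N)) (ltry 1)) mB
  (bigcapT_measurable mB) (fun n m nm => ltac:(apply/asboolP; exact: dB)).
move=> H.
have {H} : (P \o B) @ \oo --> 0%E by move: H; congr (_ --> _); exact: B0.
move=> /fine_cvgP [_ /cvgrPdist_lt /(_ e e0) [N _ HN]].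
exists N; have /= := HN N (leqnn N).
by rewrite sub0r normrN => /(le_lt_trans (ler_norm _)).
Qed.

Lemma Aset_sub (R : realType) (T : Type) (p q : T -> R) g1 g2 :
  (forall t, 0 <= q t) -> g1 <= g2 -> Aset p q g2 `<=` Aset p q g1.
Proof.
move=> q0 g12 t; rewrite /Aset /= => h; apply: le_lt_trans h.
by rewrite ler_wpM2r // q0.
Qed.

Lemma prle (R : realType) d (T : measurableType d) (P : probability T R) A B :
  measurable A -> measurable B -> A `<=` B -> fine (P A) <= fine (P B).
Proof.
move=> mA mB AB; rewrite -lee_fin -(pr_fine P mA) -(pr_fine P mB).
by apply: le_measure => //; rewrite inE.
Qed.

Lemma mset_eq (R : realType) d (T : measurableType d) (f g : T -> R) :
  measurable_fun setT f -> measurable_fun setT g -> measurable [set t | f t = g t].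
Proof.
move=> mf mg. have mt : measurable [set true] by [].
have := measurable_fun_eqr mf mg measurableT mt.
rewrite setTI; congr measurable; apply/seteqP; split => t /=.
- by move=> /eqP.
- by move=> ->; rewrite eqxx.
Qed.

Lemma mcstM (R : realType) d (T : measurableType d) (q : T -> R) (c : R) :
  measurable_fun setT q -> measurable_fun setT (fun t => c * q t).
Proof. by move=> mq; apply: measurable_funM; [exact: measurable_cst|exact: mq]. Qed.

Lemma G_mono (R : realType) d (T : measurableType d) (mu : {measure set T -> \bar R})
  (P Q : probability T R) p q (hp : is_density mu P p) (hq : is_density mu Q q) g1 g2 :
  g1 <= g2 -> fine (Q (Aset p q g2)) <= fine (Q (Aset p q g1)).
Proof.
move=> g12; apply: prle; try (apply: Aset_m; [exact: hp.1|exact: hq.1]).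
exact: Aset_sub hq.2.1 g12.
Qed.

Lemma G_diff (R : realType) d (T : measurableType d) (mu : {measure set T -> \bar R})
  (P Q : probability T R) p q (hp : is_density mu P p) (hq : is_density mu Q q) g1 g2 :
  g1 <= g2 -> fine (Q (Aset p q g1)) - fine (Q (Aset p q g2)) =
   fine (Q [set t | g1 * q t < p t /\ p t <= g2 * q t]).
Proof.
move=> g12.
have mA1 : measurable (Aset p q g1) by apply: Aset_m; [exact: hp.1|exact: hq.1].
have mA2 : measurable (Aset p q g2) by apply: Aset_m; [exact: hp.1|exact: hq.1].
rewrite (prDI Q mA1 mA2) setIidr; last exact: Aset_sub hq.2.1 g12.
suff -> : Aset p q g1 `\` Aset p q g2 = [set t | g1 * q t < p t /\ p t <= g2 * q t].
  by rewrite addrK.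
rewrite /Aset; apply/seteqP; split => t /= [h1 h2]; split => //.
- by rewrite leNgt; apply/negP.
- by apply/negP; rewrite -leNgt.
Qed.

Lemma G_cont (R : realType) d (T : measurableType d) (mu : {measure set T -> \bar R})
  (P Q : probability T R) p q (hp : is_density mu P p) (hq : is_density mu Q q) g :
  Q [set t | g * q t = p t] = 0%E ->
  forall e : R, 0 < e -> exists2 del : R, 0 < del & forall x, `|x - g| < del ->
    `|fine (Q (Aset p q x)) - fine (Q (Aset p q g))| < e.
Proof.
move=> Z0 e e0.
have mp := hp.1; have mq := hq.1; have q0 := hq.2.1.
pose dl (n : nat) : R := n.+1%:R^-1.
pose B n := [set t | (g - dl n) * q t < p t /\ p t <= (g + dl n) * q t].
have mB n : measurable (B n).
  change (measurable ([set t | (g - dl n) * q t < p t] `&` [set t | p t <= (g + dl n) * q t])).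
  by apply: measurableI; [apply: mset_lt|apply: mset_le] => //; apply: mcstM.
have dB n m : (n <= m)%N -> B m `<=` B n.
  move=> nm t [h1 h2]; have := delta_anti R nm; rewrite -/(dl n) -/(dl m) => hd.
  have qt := q0 t.
  split; nra.
have capZ : \bigcap_n B n `<=` [set t | g * q t = p t].
  move=> t Ht /=; have qt := q0 t.
  apply: le_anti; apply/andP; split; rewrite leNgt; apply/negP => H.
  - have [n hn] := arch qt (ltac:(by rewrite subr_gt0) : 0 < g * q t - p t).
    have [h1 _] := Ht n I; rewrite /dl in h1; move: h1 hn; set dd := _^-1 => h1 hn; clear -h1 hn; lra.
  - have [n hn] := arch qt (ltac:(by rewrite subr_gt0) : 0 < p t - g * q t).
    have [_ h2] := Ht n I; rewrite /dl in h2; move: h2 hn; set dd := _^-1 => h2 hn; clear -h2 hn; lra.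
have mZ : measurable [set t | g * q t = p t] by apply: mset_eq => //; apply: mcstM.
have B0 : Q (\bigcap_n B n) = 0%E.
  apply: le_anti; rewrite measure_ge0 andbT -Z0.
  by apply: le_measure => //; rewrite inE //; exact: bigcapT_measurable.
have [n hn] := small_seq mB dB B0 e0.
clear B0 capZ; try clear Z0.
exists (dl n); first exact: delta_gt0.
move=> x; rewrite ltr_norml => /andP [x1 x2].
have hd0 : 0 < dl n := delta_gt0 R n.
have hB : fine (Q (Aset p q (g - dl n))) - fine (Q (Aset p q (g + dl n))) = fine (Q (B n)) :=
  G_diff hp hq (ltac:(lra) : g - dl n <= g + dl n).
have a1 := G_mono hp hq (ltac:(lra) : g - dl n <= x).
have a2 := G_mono hp hq (ltac:(lra) : x <= g + dl n).
have a3 := G_mono hp hq (ltac:(lra) : g - dl n <= g).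
have a4 := G_mono hp hq (ltac:(lra) : g <= g + dl n).
rewrite ltr_norml; apply/andP; split; lra.
Qed.

Lemma G_rcont (R : realType) d (T : measurableType d) (mu : {measure set T -> \bar R})
  (P Q : probability T R) p q (hp : is_density mu P p) (hq : is_density mu Q q) g :
  forall e : R, 0 < e -> exists2 del : R, 0 < del & forall x, g <= x -> x < g + del ->
    `|fine (Q (Aset p q x)) - fine (Q (Aset p q g))| < e.
Proof.
move=> e e0.
have mp := hp.1; have mq := hq.1; have q0 := hq.2.1.
pose dl (n : nat) : R := n.+1%:R^-1.
pose B n := [set t | g * q t < p t /\ p t <= (g + dl n) * q t].
have mB n : measurable (B n).
  change (measurable ([set t | g * q t < p t] `&` [set t | p t <= (g + dl n) * q t])).
  by apply: measurableI; [apply: mset_lt|apply: mset_le] => //; apply: mcstM.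
have dB n m : (n <= m)%N -> B m `<=` B n.
  move=> nm t [h1 h2]; have := delta_anti R nm; rewrite -/(dl n) -/(dl m) => hd.
  have qt := q0 t.
  split; nra.
have capZ : \bigcap_n B n `<=` set0.
  move=> t Ht /=; have qt := q0 t.
  have [h1 _] := Ht 0%N I.
  have [n hn] := arch qt (ltac:(by rewrite subr_gt0) : 0 < p t - g * q t).
  have [_ h2] := Ht n I; rewrite /dl in h2; move: h2 hn; set dd := _^-1 => h2 hn; clear -h2 hn; lra.
have B0 : Q (\bigcap_n B n) = 0%E.
  have -> : \bigcap_n B n = set0 by rewrite -subset0.
  by rewrite measure0.
have [n hn] := small_seq mB dB B0 e0.
clear B0 capZ; try clear Z0.
exists (dl n); first exact: delta_gt0.
move=> x x1 x2.
have hd0 : 0 < dl n := delta_gt0 R n.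
have hB : fine (Q (Aset p q g)) - fine (Q (Aset p q (g + dl n))) = fine (Q (B n)) :=
  G_diff hp hq (ltac:(lra) : g <= g + dl n).
have a1 := G_mono hp hq (ltac:(lra) : g <= x).
have a2 := G_mono hp hq (ltac:(lra) : x <= g + dl n).
rewrite ltr_norml; apply/andP; split; lra.
Qed.

Lemma quot_bound (R : realType) (E G : R -> R) (g h : R) : h != 0 ->
  E g - h * G g <= E (h + g) -> E (h + g) + h * G (h + g) <= E g ->
  `|h^-1 * (E (h + g) - E g) + G g| <= `|G (h + g) - G g|.
Proof.
move=> h0 H1 H2.
set y := h^-1 * (E (h + g) - E g).
have hy : h * y = E (h + g) - E g by rewrite /y mulrA mulfV // mul1r.
move: hy H1 H2; set a := E (h + g); set b := E g; set G1 := G (h + g); set G0 := G g.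
move=> hy H1 H2.
have [hpos|hneg] := ltrP 0 h.
- have e1 : 0 <= y + G0 by nra.
  have e2 : y + G1 <= 0 by nra.
  rewrite (ger0_norm e1) distrC; apply: le_trans (ler_norm _); lra.
- have hneg' : h < 0 by rewrite lt_neqAle h0 hneg.
  have e1 : y + G0 <= 0 by nra.
  have e2 : 0 <= y + G1 by nra.
  rewrite (ler0_norm e1); apply: le_trans (ler_norm _); lra.
Qed.

Lemma deriv_lim (R : realType) (E G : R -> R) (g : R) : 0 < g ->
  (forall h, h != 0 -> 0 < h + g ->
     E g - h * G g <= E (h + g) /\ E (h + g) + h * G (h + g) <= E g) ->
  (forall e : R, 0 < e -> exists2 del : R, 0 < del & forall x, `|x - g| < del ->
    `|G x - G g| < e) ->
  (fun h => h^-1 * (E (h + g) - E g)) @ 0^' --> - G g.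
Proof.
move=> g0 HB Hc; apply/cvgrPdist_lt => e e0.
have [del del0 Hd] := Hc e e0.
have m0 : 0 < Num.min del g by rewrite lt_min del0 g0.
near=> h.
have hn : h != 0 by near: h; exact: nbhs_dnbhs_neq.
have hl : `|h| < Num.min del g by near: h; exact: dnbhs0_lt.
move: hl; rewrite lt_min => /andP [hd hg].
have hgp : 0 < h + g.
  have := ler_norm (- h); rewrite normrN => ?; lra.
have [B1 B2] := HB h hn hgp.
rewrite distrC opprK; apply: le_lt_trans (quot_bound hn B1 B2) _.
by apply: Hd; rewrite addrK.
Unshelve. all: by end_near.
Qed.

Lemma E_deriv (R : realType) d (T : measurableType d) (mu : {measure set T -> \bar R})
  (P Q : probability T R) p q (hp : is_density mu P p) (hq : is_density mu Q q) g :
  0 < g -> Q [set t | g * q t = p t] = 0%E ->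
  derivable (Egamma P Q) g 1 /\ derive1 (Egamma P Q) g = - fine (Q (Aset p q g)).
Proof.
move=> g0 Z.
have HB : forall h : R, h != 0 -> 0 < h + g ->
   Egamma P Q g - h * fine (Q (Aset p q g)) <= Egamma P Q (h + g) /\
   Egamma P Q (h + g) + h * fine (Q (Aset p q (h + g))) <= Egamma P Q g.
  move=> h hn hg; split.
  - by have := Egamma_ge hp hq (ltW g0) (ltW hg); rewrite addrK.
  - have := Egamma_ge hp hq (ltW hg) (ltW g0).
    have -> : g - (h + g) = - h by rewrite opprD addrCA subrr addr0.
    by rewrite mulNr opprK.
have HL := @deriv_lim R (Egamma P Q) (fun x => fine (Q (Aset p q x))) g g0 HB
  (G_cont hp hq Z).
have fE : (fun h : R => h^-1 *: ((Egamma P Q \o shift g) (h *: 1) - Egamma P Q g)) =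
          (fun h => h^-1 * (Egamma P Q (h + g) - Egamma P Q g)).
  by apply: funext => h /=; congr (_ * (Egamma P Q (_ + g) - _)); exact: mulr1.
split.
- by rewrite /derivable fE; apply/cvg_ex; exists (- fine (Q (Aset p q g))).
- rewrite /derive1; apply: cvg_lim => //.
Qed.

Lemma ln_bridge (R : realType) (b x y c : R) : 1 < b ->
  logb b x - logb b y = (ln x - ln y) / ln b /\ logb b c = ln c / ln b.
Proof. by move=> b1; split => //; rewrite /logb mulrBl. Qed.

Lemma logb_le (R : realType) (b x y g : R) : 1 < b -> 0 < x -> 0 < y -> 0 < g ->
  (logb b x - logb b y <= logb b g) = (x <= g * y).
Proof.
move=> b1 x0 y0 g0; have lb := ln_gt0 b1.
rewrite /logb (_ : ln x / ln b - ln y / ln b = (ln x - ln y) / ln b); last by rewrite mulrBl.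
rewrite ler_pM2r ?invr_gt0 //.
rewrite -(ler_ln (x:=x) (y:=g*y)) ?posrE ?mulr_gt0 //.
rewrite lnM ?posrE //; apply/idP/idP => ?; lra.
Qed.

Lemma logb_lt (R : realType) (b x y g : R) : 1 < b -> 0 < x -> 0 < y -> 0 < g ->
  (logb b x - logb b y < - logb b g) = (g * x < y).
Proof.
move=> b1 x0 y0 g0; have lb := ln_gt0 b1.
rewrite /logb (_ : ln x / ln b - ln y / ln b = (ln x - ln y) / ln b); last by rewrite mulrBl.
rewrite -mulNr ltr_pM2r ?invr_gt0 //.
rewrite -(ltr_ln (x:=g*x) (y:=y)) ?posrE ?mulr_gt0 //.
rewrite lnM ?posrE //; apply/idP/idP => ?; lra.
Qed.


Lemma logb_eq (R : realType) (b x y c : R) : 1 < b -> 0 < x -> 0 < y -> 0 < c ->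
  (logb b x - logb b y == logb b c) = (x == c * y).
Proof.
move=> b1 x0 y0 c0; have lb := ln_gt0 b1.
have lb' : (ln b)^-1 != 0 by rewrite invr_eq0 gt_eqF.
rewrite /logb (_ : ln x / ln b - ln y / ln b = (ln x - ln y) / ln b); last by rewrite mulrBl.
rewrite (inj_eq (mulIf lb')).
rewrite -(inj_in_eq (@ln_inj R) (x:=x) (y:=c*y)) ?posrE ?mulr_gt0 //.
rewrite lnM ?posrE //; apply/eqP/eqP => ?; lra.
Qed.

Lemma logb_eqN (R : realType) (b x y c : R) : 1 < b -> 0 < x -> 0 < y -> 0 < c ->
  (logb b x - logb b y == - logb b c) = (c * x == y).
Proof.
move=> b1 x0 y0 c0; have lb := ln_gt0 b1.
have lb' : (ln b)^-1 != 0 by rewrite invr_eq0 gt_eqF.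
rewrite /logb (_ : ln x / ln b - ln y / ln b = (ln x - ln y) / ln b); last by rewrite mulrBl.
rewrite -mulNr (inj_eq (mulIf lb')).
rewrite -(inj_in_eq (@ln_inj R) (x:=c*x) (y:=y)) ?posrE ?mulr_gt0 //.
rewrite lnM ?posrE //; apply/eqP/eqP => ?; lra.
Qed.

Lemma logb_ge0 (R : realType) (b g : R) : 1 < b -> 1 <= g -> 0 <= logb b g.
Proof. by move=> b1 g1; rewrite /logb divr_ge0 // ?ln_ge0 // ltW // ln_gt0. Qed.

Lemma logb1 (R : realType) (b : R) : logb b 1 = 0.
Proof. by rewrite /logb ln1 mul0r. Qed.

Lemma logb_gt0 (R : realType) (b g : R) : 1 < b -> 1 < g -> 0 < logb b g.
Proof. by move=> b1 g1; rewrite /logb divr_gt0 // ln_gt0. Qed.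

Lemma S1pt (R : realType) (T : Type) (b : R) (p q : T -> R) g t : 1 < b -> 1 <= g ->
  0 <= p t -> 0 <= q t ->
  (infodens b p q t <= (logb b g)%:E)%E = ~~ (g * q t < p t).
Proof.
move=> b1 g1 p0 q0; rewrite /infodens -leNgt.
case: eqP => [pe|/eqP pn]; case: eqP => [qe|/eqP qn].
- by rewrite pe qe mulr0 lexx lee_fin logb_ge0.
- by rewrite pe leNye mulr_ge0 // (le_trans ler01 g1).
- by rewrite qe mulr0 leye_eq; apply/esym/negbTE; rewrite -ltNge lt_neqAle eq_sym pn.
- have pp : 0 < p t by rewrite lt_neqAle eq_sym pn.
  have qp : 0 < q t by rewrite lt_neqAle eq_sym qn.
  by rewrite lee_fin logb_le // (lt_le_trans ltr01 g1).
Qed.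

Lemma S2pt (R : realType) (T : Type) (b : R) (p q : T -> R) g t : 1 < b -> 1 <= g ->
  0 <= p t -> 0 <= q t ->
  (infodens b p q t < (- logb b g)%:E)%E = (g * p t < q t).
Proof.
move=> b1 g1 p0 q0; rewrite /infodens.
have g0 : 0 < g := lt_le_trans ltr01 g1.
case: eqP => [pe|/eqP pn]; case: eqP => [qe|/eqP qn].
- by rewrite pe qe mulr0 ltxx lte_fin oppr_gt0 ltNge logb_ge0.
- have qp : 0 < q t by rewrite lt_neqAle eq_sym qn.
  by rewrite pe ltNye mulr0 qp.
- rewrite qe ltNge leey /=; apply/esym/negbTE; rewrite -leNgt mulr_ge0 //.
  exact: ltW.
- have pp : 0 < p t by rewrite lt_neqAle eq_sym pn.
  have qp : 0 < q t by rewrite lt_neqAle eq_sym qn.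
  by rewrite lte_fin logb_lt.
Qed.

Lemma S3pt (R : realType) (T : Type) (b : R) (p q : T -> R) g t : 1 < b -> 1 < g ->
  0 <= p t -> 0 <= q t ->
  (infodens b p q t == (- logb b g)%:E) = (0 < p t) && (g * p t == q t).
Proof.
move=> b1 g1 p0 q0; rewrite /infodens.
have g0 : 0 < g := lt_trans ltr01 g1.
have lg := logb_gt0 b1 g1.
have [pe|pn] := eqVneq (p t) 0; have [qe|qn] := eqVneq (q t) 0.
- by rewrite pe ltxx /=; apply/negbTE; rewrite eqe eq_sym oppr_eq0 gt_eqF.
- by rewrite pe ltxx.
- by rewrite qe mulf_eq0 (gt_eqF g0) (negbTE pn) andbF.
- have pp : 0 < p t by rewrite lt_neqAle eq_sym pn.
  have qp : 0 < q t by rewrite lt_neqAle eq_sym qn.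
  by rewrite eqe logb_eqN // pp.
Qed.

Lemma S3pt1 (R : realType) (T : Type) (b : R) (p q : T -> R) t : 1 < b ->
  0 <= p t -> 0 <= q t ->
  (infodens b p q t == (- logb b 1)%:E) =
    ((0 < p t) && (1 * p t == q t)) || ((p t == 0) && (q t == 0)).
Proof.
move=> b1 p0 q0; rewrite /infodens logb1 oppr0.
have [pe|pn] := eqVneq (p t) 0; have [qe|qn] := eqVneq (q t) 0.
- by rewrite orbT; apply/eqP.
- by rewrite pe ltxx /=.
- by rewrite qe mul1r (negbTE pn) andbF.
- have pp : 0 < p t by rewrite lt_neqAle eq_sym pn.
  have qp : 0 < q t by rewrite lt_neqAle eq_sym qn.
  rewrite eqe; have := logb_eqN b1 pp qp ltr01; rewrite logb1 oppr0 => ->.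
  by rewrite pp orbF.
Qed.

Lemma S4pt (R : realType) (T : Type) (b : R) (p q : T -> R) g t : 1 < b -> 1 < g ->
  0 <= p t -> 0 <= q t ->
  (infodens b p q t == (logb b g)%:E) = (0 < q t) && (g * q t == p t).
Proof.
move=> b1 g1 p0 q0; rewrite /infodens.
have g0 : 0 < g := lt_trans ltr01 g1.
have lg := logb_gt0 b1 g1.
have [pe|pn] := eqVneq (p t) 0; have [qe|qn] := eqVneq (q t) 0.
- by rewrite qe ltxx /=; apply/negbTE; rewrite eqe eq_sym gt_eqF.
- by rewrite pe mulf_eq0 (gt_eqF g0) (negbTE qn) andbF.
- by rewrite qe ltxx.
- have pp : 0 < p t by rewrite lt_neqAle eq_sym pn.
  have qp : 0 < q t by rewrite lt_neqAle eq_sym qn.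
  by rewrite eqe logb_eq // qp eq_sym.
Qed.

Lemma relcdf_pos (R : realType) d (T : measurableType d) (mu : {measure set T -> \bar R})
  (P Q : probability T R) p q (hp : is_density mu P p) (hq : is_density mu Q q) b g :
  1 < b -> 1 <= g -> relcdf P b p q (logb b g) = 1 - fine (P (Aset p q g)).
Proof.
move=> b1 g1; rewrite /relcdf.
have mA : measurable (Aset p q g) by apply: Aset_m; [exact: hp.1|exact: hq.1].
rewrite (_ : [set t | _] = ~` Aset p q g); last first.
  apply/seteqP; split => t /=.
  - by rewrite S1pt // ?hp.2.1 ?hq.2.1 // => /negP.
  - by move=> /negP; rewrite -(@S1pt _ _ b p q g t) // ?hp.2.1 ?hq.2.1.
by rewrite probability_setC // (pr_fine P mA) -EFinB.
Qed.

Lemma relcdf_neg (R : realType) d (T : measurableType d) (mu : {measure set T -> \bar R})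
  (P Q : probability T R) p q (hp : is_density mu P p) (hq : is_density mu Q q) b g :
  1 < b -> 1 <= g -> no_atoms P b p q ->
  measurable [set t | infodens b p q t = (- logb b g)%:E] ->
  relcdf P b p q (- logb b g) = fine (P [set t | g * p t < q t]).
Proof.
move=> b1 g1 hat mE; rewrite /relcdf.
have mL : measurable [set t | g * p t < q t].
  by apply: mset_lt; [apply: mcstM; exact: hp.1|exact: hq.1].
rewrite (_ : [set t | _] = [set t | g * p t < q t] `|` [set t | infodens b p q t = (- logb b g)%:E]); last first.
  apply/seteqP; split => t /=.
  - rewrite le_eqVlt => /orP [/eqP ->|]; first by right.
    by rewrite S2pt // ?hp.2.1 ?hq.2.1 //; left.
  - move=> [|->//]; by rewrite -(@S2pt _ _ b p q g t) // ?hp.2.1 ?hq.2.1 // => /ltW.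
rewrite measureU //; last first.
  apply/seteqP; split => t //= [].
  by rewrite -(@S2pt _ _ b p q g t) // ?hp.2.1 ?hq.2.1 // => /[swap] ->; rewrite ltxx.
have H0 := hat (- logb b g).
by rewrite [X in (_ + X)%R](_ : _ = 0%E) ?addr0 //; exact: H0.
Qed.

Lemma null_sub (R : realType) d (T : measurableType d) (P : probability T R) A B C :
  measurable A -> measurable B -> measurable C -> A `<=` B `|` C ->
  P B = 0%E -> P C = 0%E -> P A = 0%E.
Proof.
move=> mA mB mC ABC PB PC; apply: le_anti; rewrite measure_ge0 andbT.
have h := measureU2 P mB mC.
rewrite [X in (_ <= X + _)%E](_ : _ = 0%E) in h; last exact: PB.
rewrite [X in (_ <= _ + X)%E](_ : _ = 0%E) in h; last exact: PC.
rewrite adde0 in h; apply: le_trans h.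
by apply: le_measure => //; rewrite inE //; exact: measurableU.
Qed.

Lemma mpos (R : realType) d (T : measurableType d) (p : T -> R) :
  measurable_fun setT p -> measurable [set t | 0 < p t].
Proof. by move=> mp; apply: mset_lt => //; exact: measurable_cst. Qed.

Lemma mzeroset (R : realType) d (T : measurableType d) (p : T -> R) :
  measurable_fun setT p -> measurable [set t | p t = 0].
Proof. by move=> mp; apply: mset_eq => //; exact: measurable_cst. Qed.

Lemma Eset_gt1 (R : realType) d (T : measurableType d) (mu : {measure set T -> \bar R})
  (P Q : probability T R) p q (hp : is_density mu P p) (hq : is_density mu Q q) b g :
  1 < b -> 1 < g ->
  [set t | infodens b p q t = (- logb b g)%:E] = [set t | 0 < p t] `&` [set t | g * p t = q t].
Proof.
move=> b1 g1; apply/seteqP; split => t /=.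
- move/eqP; rewrite S3pt // ?hp.2.1 ?hq.2.1 // => /andP [h1 /eqP h2]; by split.
- by move=> [h1 h2]; apply/eqP; rewrite S3pt // ?hp.2.1 ?hq.2.1 // h1 h2 eqxx.
Qed.

Lemma Eset_1 (R : realType) d (T : measurableType d) (mu : {measure set T -> \bar R})
  (P Q : probability T R) p q (hp : is_density mu P p) (hq : is_density mu Q q) b :
  1 < b ->
  [set t | infodens b p q t = (- logb b 1)%:E] =
  ([set t | 0 < p t] `&` [set t | 1 * p t = q t]) `|` ([set t | p t = 0] `&` [set t | q t = 0]).
Proof.
move=> b1; apply/seteqP; split => t /=.
- move/eqP; rewrite S3pt1 // ?hp.2.1 ?hq.2.1 // => /orP [/andP [h1 /eqP h2]|/andP [/eqP h1 /eqP h2]].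
  + by left.
  + by right.
- move=> [[h1 h2]|[h1 h2]]; apply/eqP; rewrite S3pt1 // ?hp.2.1 ?hq.2.1 //.
  + by rewrite h1 h2 eqxx.
  + by rewrite h1 h2 eqxx orbT.
Qed.

Lemma Fset_gt1 (R : realType) d (T : measurableType d) (mu : {measure set T -> \bar R})
  (P Q : probability T R) p q (hp : is_density mu P p) (hq : is_density mu Q q) b g :
  1 < b -> 1 < g ->
  [set t | infodens b p q t = (logb b g)%:E] = [set t | 0 < q t] `&` [set t | g * q t = p t].
Proof.
move=> b1 g1; apply/seteqP; split => t /=.
- move/eqP; rewrite S4pt // ?hp.2.1 ?hq.2.1 // => /andP [h1 /eqP h2]; by split.
- by move=> [h1 h2]; apply/eqP; rewrite S4pt // ?hp.2.1 ?hq.2.1 // h1 h2 eqxx.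
Qed.

Lemma N1 (R : realType) d (T : measurableType d) (mu : {measure set T -> \bar R})
  (P Q : probability T R) p q (hp : is_density mu P p) (hq : is_density mu Q q) b g :
  1 < b -> 1 < g -> no_atoms P b p q -> Q [set t | g * q t = p t] = 0%E.
Proof.
move=> b1 g1 hat.
have g0 : 0 < g := lt_trans ltr01 g1.
have mp := hp.1; have mq := hq.1.
set V := [set t | 0 < q t] `&` [set t | g * q t = p t].
have mV : measurable V by apply: measurableI; [exact: mpos|apply: mset_eq => //; exact: mcstM].
have PV : P V = 0%E by rewrite /V -(Fset_gt1 hp hq b1 g1); exact: hat.
have QV : Q V = 0%E.
  have h := dens_ge hp hq (ltW g0) mV (fun t (H : V t) => ltac:(by rewrite H.2)).
  rewrite PV /= in h.
  have h0 : 0 <= fine (Q V) := fine_ge0 (measure_ge0 Q V).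
  rewrite (pr_fine Q mV); congr EFin; apply: le_anti; rewrite h0 andbT.
  by rewrite -(pmulr_rle0 _ g0).
apply: (null_sub (B := V) (C := [set t | q t = 0])) => //.
- by apply: mset_eq => //; exact: mcstM.
- exact: mzeroset.
- move=> t /= H; have [qe|qn] := eqVneq (q t) 0; first by right.
  by left; split; [rewrite /= lt_neqAle eq_sym qn hq.2.1|exact: H].
- by apply: (dens_zero hq); [exact: mzeroset|move=> t].
Qed.

Lemma N2 (R : realType) d (T : measurableType d) (mu : {measure set T -> \bar R})
  (P Q : probability T R) p q (hp : is_density mu P p) (hq : is_density mu Q q) b g :
  1 < b -> 1 < g -> no_atoms P b p q -> P [set t | g * p t = q t] = 0%E.
Proof.
move=> b1 g1 hat.
have mp := hp.1; have mq := hq.1.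
set V := [set t | 0 < p t] `&` [set t | g * p t = q t].
have mV : measurable V by apply: measurableI; [exact: mpos|apply: mset_eq => //; exact: mcstM].
have PV : P V = 0%E by rewrite /V -(Eset_gt1 hp hq b1 g1); exact: hat.
apply: (null_sub (B := V) (C := [set t | p t = 0])) => //.
- by apply: mset_eq => //; exact: mcstM.
- exact: mzeroset.
- move=> t /= H; have [pe|pn] := eqVneq (p t) 0; first by right.
  by left; split; [rewrite /= lt_neqAle eq_sym pn hp.2.1|exact: H].
- by apply: (dens_zero hp); [exact: mzeroset|move=> t].
Qed.

Lemma derivs (R : realType) d (T : measurableType d) (mu : {measure set T -> \bar R})
  (P Q : probability T R) p q (hp : is_density mu P p) (hq : is_density mu Q q) b :
  1 < b -> no_atoms P b p q -> forall g : R, 1 < g ->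
  [/\ derivable (Egamma P Q) g 1, derive1 (Egamma P Q) g = - fine (Q (Aset p q g)),
      derivable (Egamma Q P) g 1 & derive1 (Egamma Q P) g = - fine (P (Aset q p g))].
Proof.
move=> b1 hat g g1; have g0 : 0 < g := lt_trans ltr01 g1.
have [h1 h2] := E_deriv hp hq g0 (N1 hp hq b1 g1 hat).
have [h3 h4] := E_deriv hq hp g0 (N2 hp hq b1 g1 hat).
by split.
Qed.

Lemma derive1_near (R : realType) (f h : R -> R) (g : R) : 1 < g ->
  (forall x, 1 < x -> f x = h x) -> derive1 f g = derive1 h g.
Proof.
move=> g1 H; rewrite !derive1E; apply: near_eq_derive.
near=> x; apply: H; near: x; exact: lt_nbhsr.
Unshelve. all: by end_near.
Qed.

Lemma near_dist (R : realType) (g d : R) : 0 < d -> \forall x \near g, `|x - g| < d.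
Proof.
move=> d0. near=> x. rewrite distrC. near: x.
exact: (@cvgr_dist_lt _ _ _ _ _ (fun x => x) g cvg_id _ d0).
Unshelve. all: by end_near.
Qed.


Lemma partab (R : realType) (b : R) (hb : 1 < b)
  (d : measure_display) (T : measurableType d)
  (mu : {measure set T -> \bar R}) (P Q : probability T R) (p q : T -> R)
  (hp : is_density mu P p) (hq : is_density mu Q q)
  (hatom : no_atoms P b p q) :
  (forall g : R, 1 < g ->
     derivable (Egamma P Q) g 1 /\
     {for g, continuous (derive1 (Egamma P Q))} /\
     (derive1 (Egamma P Q)) g <= 0) /\
  (forall g : R, 1 < g ->
     relcdf P b p q (logb b g) = 1 - Egamma P Q g + g * (derive1 (Egamma P Q)) g /\
     relcdf P b p q (- logb b g) = - (derive1 (Egamma Q P)) g) /\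
  ((derive1 (Egamma P Q)) g @[g --> 1^'+] -->
      relcdf P b p q 0 - 1 + Egamma P Q 1) /\
  ((derive1 (Egamma Q P)) g @[g --> 1^'+] --> - relcdf P b p q 0).
Proof.
have DV := derivs hp hq hb hatom.
split; [|split; [|split]].
- move=> g g1; have [D1 D2 _ _] := DV g g1.
  split; first exact: D1.
  split; last first.
    rewrite D2 oppr_le0; exact: fine_ge0 (measure_ge0 _ _).
  have g0 : 0 < g := lt_trans ltr01 g1.
  apply/cvgrPdist_lt => e e0.
  have [del del0 Hd] := G_cont hp hq (N1 hp hq hb g1 hatom) e0.
  near=> x.
  have x1 : 1 < x by near: x; exact: lt_nbhsr.
  have hx : `|x - g| < del by near: x; exact: near_dist.
  have [_ D3 _ _] := DV x x1.
  rewrite D2 D3 opprK addrC.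
  exact: (Hd x hx).
- move=> g g1; have [_ D2 _ D4] := DV g g1.
  have g0 : 0 < g := lt_trans ltr01 g1.
  split.
  + rewrite (relcdf_pos hp hq hb (ltW g1)) (Egamma_eq hp hq (ltW g0)) D2.
    by rewrite mulrN; lra.
  + rewrite (relcdf_neg hp hq hb (ltW g1) hatom) ?D4 ?opprK //.
    rewrite (Eset_gt1 hp hq hb g1); apply: measurableI; first exact: mpos hp.1.
    by apply: mset_eq; [apply: mcstM; exact: hp.1|exact: hq.1].
- have -> : relcdf P b p q 0 - 1 + Egamma P Q 1 = - fine (Q (Aset p q 1)).
    rewrite -(logb1 b) (relcdf_pos hp hq hb (lexx 1)) (Egamma_eq hp hq ler01).
    by rewrite mul1r; lra.
  apply/cvgrPdist_lt => e e0.
  have [del del0 Hd] := G_rcont hp hq 1 e0.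
  near=> x.
  have x1 : 1 < x by near: x; exact: nbhs_right_gt.
  have x2 : x < 1 + del by near: x; apply: nbhs_right_lt; rewrite ltrDl.
  have [_ D2 _ _] := DV x x1.
  by rewrite D2 opprK addrC; apply: Hd => //; exact: ltW.
- have -> : relcdf P b p q 0 = fine (P (Aset q p 1)).
    rewrite -oppr0 -(logb1 b) (relcdf_neg hp hq hb (lexx 1) hatom) //.
    rewrite (Eset_1 hp hq hb); apply: measurableU; apply: measurableI.
    + exact: mpos hp.1.
    + by apply: mset_eq; [apply: mcstM; exact: hp.1|exact: hq.1].
    + exact: mzeroset hp.1.
    + exact: mzeroset hq.1.
  apply/cvgrPdist_lt => e e0.
  have [del del0 Hd] := G_rcont hq hp 1 e0.
  near=> x.
  have x1 : 1 < x by near: x; exact: nbhs_right_gt.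
  have x2 : x < 1 + del by near: x; apply: nbhs_right_lt; rewrite ltrDl.
  have [_ _ _ D4] := DV x x1.
  by rewrite D4 opprK addrC; apply: Hd => //; exact: ltW.
Unshelve. all: by end_near.
Qed.

Unset Implicit Arguments. Set Strict Implicit.

Theorem theorem3 (R : realType) (b : R) (hb : 1 < b)
  (d : measure_display) (T : measurableType d)
  (mu : {measure set T -> \bar R}) (P Q : probability T R) (p q : T -> R)
  (hp : is_density mu P p) (hq : is_density mu Q q)
  (hatom : no_atoms P b p q) :
  (* (a) *)
  (forall g : R, 1 < g ->
     derivable (Egamma P Q) g 1 /\
     {for g, continuous (derive1 (Egamma P Q))} /\
     (derive1 (Egamma P Q)) g <= 0) /\
  (* (b) *)
  (forall g : R, 1 < g ->
     relcdf P b p q (logb b g) = 1 - Egamma P Q g + g * (derive1 (Egamma P Q)) g /\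
     relcdf P b p q (- logb b g) = - (derive1 (Egamma Q P)) g) /\
  ((derive1 (Egamma P Q)) g @[g --> 1^'+] -->
      relcdf P b p q 0 - 1 + Egamma P Q 1) /\
  ((derive1 (Egamma Q P)) g @[g --> 1^'+] --> - relcdf P b p q 0) /\
  (* (c) *)
  (forall (d' : measure_display) (T' : measurableType d')
     (mu' : {measure set T' -> \bar R}) (P' Q' : probability T' R)
     (p' q' : T' -> R),
     is_density mu' P' p' -> is_density mu' Q' q' -> no_atoms P' b p' q' ->
     ((forall g : R, 1 <= g -> Egamma P Q g = Egamma P' Q' g) ->
        forall x : R, 0 <= x -> relcdf P b p q x = relcdf P' b p' q' x) /\
     ((forall g : R, 1 < g -> Egamma Q P g = Egamma Q' P' g) ->
        forall x : R, x < 0 -> relcdf P b p q x = relcdf P' b p' q' x)).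
Proof.
have [A [B [C D]]] := partab hb hp hq hatom.
split => //; split => //; split => //; split => //.
move=> d' T' mu' P' Q' p' q' hp' hq' hat'.
have [A' [B' [C' D']]] := partab hb hp' hq' hat'.
have lb : 0 < ln b := ln_gt0 hb.
split.
- move=> HE x x0.
  have [xpos|xz] : 0 < x \/ x = 0.
    by move: x0; rewrite le_eqVlt => /orP [/eqP <-|]; [right|left].
  + set g := expR (x * ln b).
    have g1 : 1 < g by rewrite /g expR_gt1 mulr_gt0.
    have lg : logb b g = x by rewrite /logb /g expRK mulfK // gt_eqF.
    rewrite -lg (B g g1).1 (B' g g1).1 (HE g (ltW g1)).
    by rewrite (derive1_near g1 (fun y y1 => HE y (ltW y1))).
  + subst x.
    have C'' : (derive1 (Egamma P Q)) g @[g --> 1^'+] -->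
        relcdf P' b p' q' 0 - 1 + Egamma P' Q' 1.
      apply: (cvg_trans _ C'); apply: near_eq_cvg; near=> y.
      have y1 : 1 < y by near: y; exact: nbhs_right_gt.
      by rewrite (derive1_near y1 (fun z z1 => HE z (ltW z1))).
    have h1 := cvg_lim _ C.
    have h2 := cvg_lim _ C''.
    have := HE 1 (lexx 1).
    move: h1 h2; set L := lim _ => h1 h2 h3.
    have e1 := h1 (@norm_hausdorff _ _) (at_right_proper_filter 1).
    have e2 := h2 (@norm_hausdorff _ _) (at_right_proper_filter 1).
    clear h1 h2 C C' C'' A A' B B' D D'.
    lra.
- move=> HE x x0.
  set g := expR (- x * ln b).
  have g1 : 1 < g by rewrite /g expR_gt1 mulr_gt0 // oppr_gt0.
  have lg : - logb b g = x by rewrite /logb /g expRK mulfK ?gt_eqF // opprK.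
  rewrite -lg (B g g1).2 (B' g g1).2.
  by rewrite (derive1_near g1 (fun y y1 => HE y y1)).
Unshelve. all: by end_near.
Qed.
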